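(* Let $n\ge 2$, $k\ge 1$, and let $f_i(x)=\frac12 a_ix^2-b_ix$ ($i=1,\dots,n$) be univariate functions satisfying Assumption (B) with parameters $\lambda,L,G$, where $F(x)=\frac1n\sum_{i=1}^n f_i(x)=\frac{\lambda}{2}x^2-bx$. Assume $\frac{L}{\lambda}\le \frac{nk}{\log(n^{1/2}k)}$. Then SGD with single shuffling, run for $k$ epochs from an arbitrary $x_0\in\mathbb{R}$ with constant step size $\eta=\frac{\log(n^{1/2}k)}{\lambda nk}$, satisfies \[ \mathbb{E}\Big[F(x_k)-\inf_xF(x)\Big]\;\le\;\tilde{O}\left(\frac{\lambda}{nk^2}(x_0-x^* )^2+\frac{G^2L^2}{\lambda^3nk^2}\right), \] where $x^*=\arg\min_x F(x)$, the expectation is over the uniformly random permutation, and $\tilde O(\cdot)$ hides a universal multiplicative constant and factors polylogarithmic in $n$ and $k$.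
   Context: Assumption (B) (parameters $\lambda,L,G>0$): $F(x)=\frac1n\sum_{i=1}^nf_i(x)$ is $\lambda$-strongly convex on $\mathbb{R}$; each $f_i(x)=\frac{a_i}{2}x^2-b_ix$ is convex (i.e. $a_i\ge 0$), has $L$-Lipschitz derivative (i.e. $a_i\le L$), and satisfies $|f_i'(x^* )|\le G$ where $x^*=\arg\min_xF(x)$. SGD with single shuffling: one uniformly random permutation $\sigma$ of $\{1,\dots,n\}$ is drawn once; then for each of $k$ epochs, perform the updates $x\leftarrow x-\eta f_{\sigma(j)}'(x)$ for $j=1,\dots,n$ in order; $x_t$ is the iterate at the end of epoch $t$. *)

(* Defs.v *)
From Stdlib Require Import Reals Lra Lia List Permutation.
Open Scope R_scope.

Definition sumR (n : nat) (g : nat -> R) : R :=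
  fold_right (fun i acc => g i + acc) 0 (seq 0 n).

(* f_i(x) = a_i/2 x^2 - b_i x and its derivative. Components are indexed 0..n-1. *)
Definition fcomp (a b : nat -> R) (i : nat) (x : R) : R := a i / 2 * x ^ 2 - b i * x.
Definition dfcomp (a b : nat -> R) (i : nat) (x : R) : R := a i * x - b i.

Definition Fobj (n : nat) (a b : nat -> R) (x : R) : R :=
  / INR n * sumR n (fun i => fcomp a b i x).

(* One epoch of SGD along the order given by the list sigma
   (sigma = [sigma(1); ...; sigma(n)]): x <- x - eta f'_{sigma(j)}(x), j = 1..n in order. *)
Definition epoch (a b : nat -> R) (eta : R) (sigma : list nat) (x : R) : R :=
  fold_left (fun y i => y - eta * dfcomp a b i y) sigma x.

Fixpoint sgd_ss (a b : nat -> R) (eta : R) (sigma : list nat) (k : nat) (x0 : R) : R :=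
  match k with
  | O => x0
  | S k' => epoch a b eta sigma (sgd_ss a b eta sigma k' x0)
  end.

Definition perm_enum (n : nat) (P : list (list nat)) : Prop :=
  NoDup P /\ forall l, In l P <-> Permutation (seq 0 n) l.

Definition avg (P : list (list nat)) (g : list nat -> R) : R :=
  fold_right (fun l acc => g l + acc) 0 P / INR (length P).

(* Main.v *)
Require Import Defs.
From Stdlib Require Import Reals Lra Lia List Permutation.
Open Scope R_scope.

Definition Lsum {A : Type} (h : A -> R) (l : list A) : R :=
  fold_right (fun x acc => h x + acc) 0 l.

Lemma sumR_Lsum n h : sumR n h = Lsum h (seq 0 n).
Proof. reflexivity. Qed.

Lemma Lsum_app {A} (h : A -> R) l1 l2 : Lsum h (l1 ++ l2) = Lsum h l1 + Lsum h l2.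
Proof. induction l1; simpl; [lra|]. unfold Lsum in *; simpl; rewrite IHl1; lra. Qed.

Lemma Lsum_perm {A} (h : A -> R) l l' : Permutation l l' -> Lsum h l = Lsum h l'.
Proof. induction 1; unfold Lsum in *; simpl; lra. Qed.

Lemma Lsum_le {A} (h h' : A -> R) l : (forall x, In x l -> h x <= h' x) -> Lsum h l <= Lsum h' l.
Proof. induction l; intros H; unfold Lsum in *; simpl; [lra|].
  assert (h a <= h' a) by (apply H; simpl; auto).
  assert (fold_right (fun x acc => h x + acc) 0 l <= fold_right (fun x acc => h' x + acc) 0 l)
   by (apply IHl; intros; apply H; simpl; auto). lra. Qed.

Lemma Lsum_ext {A} (h h' : A -> R) l : (forall x, In x l -> h x = h' x) -> Lsum h l = Lsum h' l.
Proof. intros; apply Rle_antisym; apply Lsum_le; intros x Hx; rewrite (H x Hx); lra. Qed.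

Lemma Lsum_plus {A} (h h' : A -> R) l : Lsum (fun x => h x + h' x) l = Lsum h l + Lsum h' l.
Proof. induction l; unfold Lsum in *; simpl; [lra|]. rewrite IHl; lra. Qed.

Lemma Lsum_scal {A} (c : R) (h : A -> R) l : Lsum (fun x => c * h x) l = c * Lsum h l.
Proof. induction l; unfold Lsum in *; simpl; [lra|]. rewrite IHl; lra. Qed.

Lemma Lsum_const {A} (c : R) (l : list A) : Lsum (fun _ => c) l = INR (length l) * c.
Proof. induction l; unfold Lsum in *; simpl length; [simpl; lra|]. rewrite S_INR; simpl; rewrite IHl; lra. Qed.

Lemma Lsum_map {A B} (h : B -> R) (f : A -> B) l : Lsum h (map f l) = Lsum (fun x => h (f x)) l.
Proof. induction l; unfold Lsum in *; simpl; [lra|]. rewrite IHl; lra. Qed.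

Lemma Lsum_exch {A B} (h : A -> B -> R) l1 l2 :
  Lsum (fun x => Lsum (fun y => h x y) l2) l1 = Lsum (fun y => Lsum (fun x => h x y) l1) l2.
Proof. induction l1.
  - change (0 = Lsum (fun _ => 0) l2). rewrite Lsum_const; lra.
  - change (Lsum (fun y => h a y) l2 + Lsum (fun x => Lsum (fun y => h x y) l2) l1 =
            Lsum (fun y => h a y + Lsum (fun x => h x y) l1) l2).
    rewrite (Lsum_plus (fun y => h a y) (fun y => Lsum (fun x => h x y) l1)), IHl1; lra. Qed.

Lemma Lsum_nonneg {A} (h : A -> R) l : (forall x, In x l -> 0 <= h x) -> 0 <= Lsum h l.
Proof. intros H. replace 0 with (Lsum (fun _ : A => 0) l).
  apply Lsum_le; auto. rewrite Lsum_const; lra. Qed.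

Lemma sumR_S_r m h : sumR (S m) h = sumR m h + h m.
Proof. rewrite !sumR_Lsum, seq_S, Lsum_app. unfold Lsum at 2; simpl; lra. Qed.

Lemma Lsum_seq_shift h st m :
  Lsum h (seq (S st) m) = Lsum (fun i => h (S i)) (seq st m).
Proof. revert st; induction m; intros st; [reflexivity|].
  simpl. unfold Lsum in *; simpl. rewrite IHm. reflexivity. Qed.

Lemma sumR_S_l m h : sumR (S m) h = h 0%nat + sumR m (fun i => h (S i)).
Proof. rewrite !sumR_Lsum. simpl. unfold Lsum at 1; simpl. fold (Lsum h (seq 1 m)).
  rewrite Lsum_seq_shift. reflexivity. Qed.

Lemma sumR_ext m h h' : (forall i, (i < m)%nat -> h i = h' i) -> sumR m h = sumR m h'.
Proof. intros H; rewrite !sumR_Lsum; apply Lsum_ext; intros x Hx; apply in_seq in Hx; apply H; lia. Qed.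

Lemma sumR_le m h h' : (forall i, (i < m)%nat -> h i <= h' i) -> sumR m h <= sumR m h'.
Proof. intros H; rewrite !sumR_Lsum; apply Lsum_le; intros x Hx; apply in_seq in Hx; apply H; lia. Qed.

Lemma sumR_const m c : sumR m (fun _ => c) = INR m * c.
Proof. rewrite sumR_Lsum, Lsum_const, length_seq; reflexivity. Qed.

Lemma sumR_delta m a z : (a < m)%nat -> sumR m (fun j => if Nat.eqb j a then z else 0) = z.
Proof. induction m; intros H; [lia|]. rewrite sumR_S_r.
  destruct (Nat.eqb_spec m a).
  - subst. rewrite (sumR_ext _ _ (fun _ => 0)). rewrite sumR_const; lra.
    intros i Hi; destruct (Nat.eqb_spec i a); [lia|reflexivity].
  - rewrite IHm by lia. lra. Qed.

Lemma nth_sum (h : nat -> R) l : sumR (length l) (fun j => h (nth j l O)) = Lsum h l.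
Proof. induction l; [reflexivity|]. simpl length. rewrite sumR_S_l. simpl.
  rewrite IHl. reflexivity. Qed.

Lemma Lsum_invol {A} (P : list A) (phi : A -> A) (h : A -> R) :
  NoDup P -> (forall l, In l P -> In (phi l) P) -> (forall l, In l P -> phi (phi l) = l) ->
  Lsum (fun l => h (phi l)) P = Lsum h P.
Proof. intros ND Hin Hinv. rewrite <- Lsum_map. apply Lsum_perm.
  apply NoDup_Permutation.
  - apply NoDup_map_NoDup_ForallPairs; auto. intros x y Hx Hy E.
    rewrite <- (Hinv x Hx), <- (Hinv y Hy), E; reflexivity.
  - exact ND.
  - intros x; split.
    + intros Hx; apply in_map_iff in Hx; destruct Hx as [y [<- Hy]]; auto.
    + intros Hx; apply in_map_iff; exists (phi x); split; auto. Qed.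

Definition tr (b c j : nat) : nat := if Nat.eqb j b then c else if Nat.eqb j c then b else j.

Lemma tr_invol b c j : tr b c (tr b c j) = j.
Proof. unfold tr. destruct (Nat.eqb_spec j b).
  - destruct (Nat.eqb_spec c b); [lia|]. rewrite Nat.eqb_refl; lia.
  - destruct (Nat.eqb_spec j c).
    + rewrite Nat.eqb_refl; lia.
    + destruct (Nat.eqb_spec j b); [lia|]. destruct (Nat.eqb_spec j c); lia. Qed.

Lemma tr_lt b c j m : (b < m)%nat -> (c < m)%nat -> (j < m)%nat -> (tr b c j < m)%nat.
Proof. unfold tr; intros; destruct (Nat.eqb_spec j b); destruct (Nat.eqb_spec j c); lia. Qed.

Definition sw (b c : nat) (l : list nat) : list nat :=
  map (fun j => nth (tr b c j) l O) (seq 0 (length l)).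

Lemma sw_length b c l : length (sw b c l) = length l.
Proof. unfold sw; rewrite length_map, length_seq; reflexivity. Qed.

Lemma nth_map_seq {B} (f : nat -> B) m j d : (j < m)%nat -> nth j (map f (seq 0 m)) d = f j.
Proof. intros. rewrite (nth_indep _ d (f O)) by (rewrite length_map, length_seq; auto).
  rewrite map_nth, seq_nth; auto. Qed.

Lemma sw_nth b c l j : (j < length l)%nat -> nth j (sw b c l) O = nth (tr b c j) l O.
Proof. intros H. unfold sw. rewrite nth_map_seq; auto. Qed.

Lemma sw_invol b c l : (b < length l)%nat -> (c < length l)%nat -> sw b c (sw b c l) = l.
Proof. intros Hb Hc. apply nth_ext with O O. rewrite !sw_length; auto.
  intros j Hj. rewrite !sw_length in Hj. rewrite sw_nth by (rewrite sw_length; auto).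
  rewrite sw_nth by (apply tr_lt; auto). rewrite tr_invol; reflexivity. Qed.

Lemma map_nth_self l : map (fun j => nth j l O) (seq 0 (length l)) = l.
Proof. apply nth_ext with O O. rewrite length_map, length_seq; auto.
  intros j Hj; rewrite length_map, length_seq in Hj.
  rewrite nth_map_seq; auto. Qed.

Lemma sw_perm b c l : (b < length l)%nat -> (c < length l)%nat -> Permutation l (sw b c l).
Proof. intros Hb Hc.
  assert (Hs : Permutation (seq 0 (length l)) (map (tr b c) (seq 0 (length l)))).
  { apply NoDup_Permutation. apply seq_NoDup.
    - apply NoDup_map_NoDup_ForallPairs; [|apply seq_NoDup].
      intros x y _ _ E. rewrite <- (tr_invol b c x), <- (tr_invol b c y), E; reflexivity.
    - intros x; rewrite in_map_iff; split.
      + intros Hx; exists (tr b c x); split; [apply tr_invol|].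
        apply in_seq in Hx; apply in_seq; split; [lia|]. simpl. apply tr_lt; lia.
      + intros [y [<- Hy]]. apply in_seq in Hy; apply in_seq; split; [lia|]. simpl. apply tr_lt; lia. }
  apply (Permutation_map (fun j => nth j l O)) in Hs. rewrite map_nth_self, map_map in Hs.
  exact Hs. Qed.

Section Prob.
Variable n : nat.
Variable P : list (list nat).
Hypothesis HP : perm_enum n P.

Lemma P_len l : In l P -> length l = n.
Proof. intros H. apply HP in H. apply Permutation_length in H. rewrite <- H, length_seq; auto. Qed.

Lemma P_nth l i : In l P -> (i < n)%nat -> (nth i l O < n)%nat.
Proof. intros H Hi. assert (Hl := P_len l H). apply HP in H.
  assert (In (nth i l O) l) by (apply nth_In; lia).
  apply (Permutation_in _ (Permutation_sym H)) in H0. apply in_seq in H0; lia. Qed.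

Lemma P_sum (h : nat -> R) l : In l P -> Lsum h l = sumR n h.
Proof. intros H. apply HP in H. rewrite sumR_Lsum. apply Lsum_perm. apply Permutation_sym; auto. Qed.

Lemma P_sw b c l : (b < n)%nat -> (c < n)%nat -> In l P -> In (sw b c l) P.
Proof. intros Hb Hc H. assert (Hl := P_len l H). apply HP. apply HP in H.
  eapply perm_trans; [exact H|]. apply sw_perm; lia. Qed.

Lemma P_swap_eq (f : nat -> nat -> R) a b c :
  (a < n)%nat -> (b < n)%nat -> (c < n)%nat -> a <> b -> a <> c ->
  Lsum (fun l => f (nth a l O) (nth b l O)) P = Lsum (fun l => f (nth a l O) (nth c l O)) P.
Proof. intros Ha Hb Hc Hab Hac.
  rewrite <- (Lsum_invol P (sw b c) (fun l => f (nth a l O) (nth c l O))).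
  - apply Lsum_ext; intros l Hl. assert (Hl' := P_len l Hl).
    rewrite !sw_nth by lia. unfold tr.
    destruct (Nat.eqb_spec a b); [lia|]. destruct (Nat.eqb_spec a c); [lia|].
    destruct (Nat.eqb_spec c b). subst; reflexivity. rewrite Nat.eqb_refl; reflexivity.
  - apply HP.
  - intros; apply P_sw; auto.
  - intros l Hl; assert (Hl' := P_len l Hl); apply sw_invol; lia. Qed.

Variable g : nat -> R.
Hypothesis Hg0 : sumR n g = 0.
Hypothesis Hn : (2 <= n)%nat.

Lemma P_offdiag a b : (a < n)%nat -> (b < n)%nat -> a <> b ->
  Lsum (fun l => g (nth a l O) * g (nth b l O)) P <= 0.
Proof. intros Ha Hb Hab.
  set (D := Lsum (fun l => g (nth a l O) * g (nth a l O)) P).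
  set (E := Lsum (fun l => g (nth a l O) * g (nth b l O)) P).
  assert (HD : 0 <= D) by (apply Lsum_nonneg; intros; nra).
  assert (H0 : Lsum (fun l => g (nth a l O) * sumR n (fun j => g (nth j l O))) P = 0).
  { transitivity (Lsum (fun _ => 0) P); [|rewrite Lsum_const; ring].
    apply Lsum_ext; intros l Hl.
    rewrite <- (P_len l Hl) at 1. rewrite nth_sum, P_sum, Hg0 by auto. ring. }
  assert (H1 : Lsum (fun l => g (nth a l O) * sumR n (fun j => g (nth j l O))) P
              = sumR n (fun j => if Nat.eqb j a then D else E)).
  { transitivity (Lsum (fun l => Lsum (fun j => g (nth a l O) * g (nth j l O)) (seq 0 n)) P).
    { apply Lsum_ext; intros. rewrite sumR_Lsum, Lsum_scal; reflexivity. }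
    rewrite Lsum_exch, <- sumR_Lsum. apply sumR_ext; intros j Hj.
    destruct (Nat.eqb_spec j a). subst; reflexivity.
    destruct (Nat.eqb_spec j b). subst; reflexivity.
    unfold E. symmetry. apply (P_swap_eq (fun x y => g x * g y)); auto. }
  assert (H2 : sumR n (fun j => if Nat.eqb j a then D else E) = (D - E) + INR n * E).
  { rewrite (sumR_ext _ _ (fun j => (if Nat.eqb j a then D - E else 0) + E)).
    rewrite sumR_Lsum, Lsum_plus, <- !sumR_Lsum, sumR_delta, sumR_const by auto. ring.
    intros i _. destruct (Nat.eqb i a); ring. }
  assert (Hn2 : 2 <= INR n) by (replace 2 with (INR 2) by (simpl; lra); apply le_INR; auto).
  fold E. nra. Qed.

Variable G2 : R.
Hypothesis HG : forall i, (i < n)%nat -> g i ^ 2 <= G2.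

Definition prefx (l : list nat) (j : nat) : R := sumR j (fun i => g (nth i l O)).

Lemma P_pre_sq j : (j <= n)%nat ->
  Lsum (fun l => (prefx l j) ^ 2) P <= INR j * G2 * INR (length P).
Proof. intros Hj.
  assert (E1 : forall l, (prefx l j) ^ 2 = sumR j (fun i => sumR j (fun i' => g (nth i l O) * g (nth i' l O)))).
  { intros l. unfold prefx. replace (sumR j (fun i => g (nth i l O)) ^ 2) with (sumR j (fun i => g (nth i l O)) * sumR j (fun i => g (nth i l O))) by ring. rewrite !sumR_Lsum.
    rewrite <- (Lsum_scal (Lsum (fun i => g (nth i l O)) (seq 0 j))). apply Lsum_ext; intros i _.
    rewrite Rmult_comm, <- Lsum_scal. apply Lsum_ext; intros; ring. }
  rewrite (Lsum_ext _ _ _ (fun l _ => E1 l)).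
  rewrite (Lsum_ext _ (fun l => Lsum (fun i => Lsum (fun i' => g (nth i l O) * g (nth i' l O)) (seq 0 j)) (seq 0 j)))
    by (intros; reflexivity).
  rewrite Lsum_exch.
  transitivity (Lsum (fun _ : nat => G2 * INR (length P)) (seq 0 j)).
  2:{ rewrite Lsum_const, length_seq. lra. }
  apply Lsum_le; intros i Hi. apply in_seq in Hi.
  rewrite Lsum_exch.
  transitivity (Lsum (fun i' => if Nat.eqb i' i then G2 * INR (length P) else 0) (seq 0 j)).
  - apply Lsum_le; intros i' Hi'. apply in_seq in Hi'.
    destruct (Nat.eqb_spec i' i).
    + subst. replace (G2 * INR (length P)) with (INR (length P) * G2) by ring.
      rewrite <- Lsum_const. apply Lsum_le; intros l Hl.
      assert (H := HG _ (P_nth l i Hl ltac:(lia))). simpl in H. lra.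
    + apply P_offdiag; lia.
  - rewrite <- sumR_Lsum, sumR_delta by lia. lra. Qed.

Lemma P_Sq : Lsum (fun l => sumR n (fun j => (prefx l j) ^ 2)) P <= INR n * INR n * G2 * INR (length P).
Proof.
  assert (HG2 : 0 <= G2) by (assert (H := HG 0%nat ltac:(lia)); nra).
  rewrite (Lsum_ext _ (fun l => Lsum (fun j => (prefx l j) ^ 2) (seq 0 n))) by (intros; reflexivity).
  rewrite Lsum_exch.
  transitivity (Lsum (fun _ : nat => INR n * G2 * INR (length P)) (seq 0 n)).
  - apply Lsum_le; intros j Hj. apply in_seq in Hj.
    eapply Rle_trans. apply P_pre_sq; lia.
    apply Rmult_le_compat_r; [apply pos_INR|]. apply Rmult_le_compat_r; auto. apply le_INR; lia.
  - rewrite Lsum_const, length_seq. lra. Qed.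
End Prob.

Section Dyn.
Variables (a b : nat -> R) (eta xs : R).
Let g i := dfcomp a b i xs.

Fixpoint Qp (l : list nat) : R := match l with nil => 1 | i :: l' => (1 - eta * a i) * Qp l' end.
Fixpoint Wn (l : list nat) : R := match l with nil => 0 | i :: l' => Wn l' - eta * g i * Qp l' end.
Fixpoint Rr (s : R) (l : list nat) : R := match l with nil => 0 | i :: l' => s * a i * Qp l' + Rr (s + g i) l' end.
Fixpoint Sq (s : R) (l : list nat) : R := match l with nil => 0 | i :: l' => s ^ 2 + Sq (s + g i) l' end.
Fixpoint geom (q : R) (k : nat) : R := match k with O => 0 | S k' => 1 + q * geom q k' end.

Lemma epoch_err l : forall x, epoch a b eta l x - xs = Qp l * (x - xs) + Wn l.
Proof. induction l as [|i l IH]; intros x; [simpl; unfold epoch; simpl; ring|].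
  unfold epoch in *. simpl. rewrite IH. unfold g, dfcomp. ring. Qed.

Lemma sgd_err l k x0 : sgd_ss a b eta l k x0 - xs = Qp l ^ k * (x0 - xs) + Wn l * geom (Qp l) k.
Proof. induction k; simpl; [ring|]. rewrite epoch_err.
  replace (sgd_ss a b eta l k x0 - xs) with (Qp l ^ k * (x0 - xs) + Wn l * geom (Qp l) k) by (rewrite <- IHk; ring). ring. Qed.

Lemma geom_bound q k : 0 <= q <= 1 -> 0 <= geom q k <= INR k.
Proof. intros Hq; induction k; simpl geom; [simpl; lra|]. rewrite S_INR. nra. Qed.

Lemma W_abel l : forall s, eta * s * Qp l - Wn l = eta * (s + Lsum g l) - eta ^ 2 * Rr s l.
Proof. induction l as [|i l IH]; intros s; simpl; [unfold Lsum; simpl; ring|].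
  specialize (IH (s + g i)). unfold Lsum in *; simpl. 
  replace (eta * s * ((1 - eta * a i) * Qp l) - (Wn l - eta * g i * Qp l))
    with ((eta * (s + g i) * Qp l - Wn l) - eta ^ 2 * (s * a i * Qp l)) by ring.
  rewrite IH. ring. Qed.

Lemma Sq_nonneg l : forall s, 0 <= Sq s l.
Proof. induction l; intros s; simpl; [lra|]. specialize (IHl (s + g a0)). nra. Qed.

Variable L : R.

Lemma Qp_bound l : (forall i, In i l -> 0 <= eta * a i <= 1) -> 0 <= Qp l <= 1.
Proof. induction l; intros H; simpl; [lra|].
  assert (H1 := H a0 (or_introl eq_refl)).
  assert (H2 : 0 <= Qp l <= 1) by (apply IHl; intros; apply H; simpl; auto). nra. Qed.

Lemma Qp_exp l : (forall i, In i l -> 0 <= eta * a i <= 1) -> Qp l <= exp (- (eta * Lsum a l)).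
Proof. induction l; intros H; simpl; unfold Lsum in *; simpl.
  - rewrite Rmult_0_r, Ropp_0, exp_0; lra.
  - replace (- (eta * (a a0 + fold_right (fun x acc => a x + acc) 0 l)))
      with ((- (eta * a a0)) + - (eta * fold_right (fun x acc => a x + acc) 0 l)) by ring.
    rewrite exp_plus. assert (H1 := exp_ineq1_le (- (eta * a a0))).
    assert (H' : forall i, In i l -> 0 <= eta * a i <= 1) by (intros; apply H; simpl; auto).
    assert (H2 := Qp_bound l H'). assert (H3 := H a0 (or_introl eq_refl)).
    assert (H4 := IHl H').
    apply Rmult_le_compat; lra. Qed.

Lemma Rr_bound l : (forall i, In i l -> 0 <= a i <= L) -> (forall i, In i l -> 0 <= eta * a i <= 1) ->
  forall s, Rr s l ^ 2 <= L ^ 2 * INR (length l) * Sq s l.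
Proof. induction l as [|i l IH]; intros Ha Hea s; simpl Rr; simpl Sq; [simpl; lra|].
  set (x := s * a i * Qp l).
  assert (Ha' : forall i, In i l -> 0 <= a i <= L) by (intros; apply Ha; simpl; auto).
  assert (Hea' : forall i, In i l -> 0 <= eta * a i <= 1) by (intros; apply Hea; simpl; auto).
  specialize (IH Ha' Hea' (s + g i)).
  assert (Hx : x ^ 2 <= L ^ 2 * s ^ 2).
  { unfold x. assert (H1 := Qp_bound l Hea'). assert (Hai := Ha i (or_introl eq_refl)).
    assert (0 <= a i * Qp l <= L) by nra.
    replace ((s * a i * Qp l) ^ 2) with (s ^ 2 * (a i * Qp l) ^ 2) by ring.
    replace (L ^ 2 * s ^ 2) with (s ^ 2 * L ^ 2) by ring.
    apply Rmult_le_compat_l; [nra|]. apply pow_incr; lra. }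
  assert (HS := Sq_nonneg l (s + g i)).
  simpl length. rewrite S_INR.
  destruct l as [|j l'].
  - simpl in *. lra.
  - set (m := INR (length (j :: l'))) in *.
    assert (Hm : 0 < m) by (unfold m; apply lt_0_INR; simpl; lia).
    set (R' := Rr (s + g i) (j :: l')) in *. set (S' := Sq (s + g i) (j :: l')) in *.
    assert (m * (x + R') ^ 2 <= m * (m + 1) * x ^ 2 + (m + 1) * R' ^ 2).
    { assert (0 <= (m * x - R') ^ 2) by (apply pow2_ge_0). nra. }
    assert (m * (x + R') ^ 2 <= m * (L ^ 2 * (m + 1) * (s ^ 2 + S'))).
    { assert (m * (m + 1) * x ^ 2 <= m * (m + 1) * (L ^ 2 * s ^ 2)) by (apply Rmult_le_compat_l; nra).
      assert ((m + 1) * R' ^ 2 <= (m + 1) * (L ^ 2 * m * S')) by (apply Rmult_le_compat_l; lra).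
      nra. }
    apply Rmult_le_reg_l with m; auto. Qed.
End Dyn.

Lemma Sq_idx (a b : nat -> R) xs l : forall s,
  Sq a b xs s l = sumR (length l) (fun j => (s + prefx (fun i => dfcomp a b i xs) l j) ^ 2).
Proof. induction l as [|i l IH]; intros s; [reflexivity|].
  simpl Sq. simpl length. rewrite sumR_S_l. rewrite IH.
  assert (E0 : prefx (fun i0 => dfcomp a b i0 xs) (i :: l) 0 = 0) by reflexivity.
  rewrite E0. f_equal; [ring|]. apply sumR_ext; intros j _.
  unfold prefx. rewrite sumR_S_l. simpl nth. f_equal. ring. Qed.

Lemma Lsum_fcomp a b x (l : list nat) :
  Lsum (fun i => fcomp a b i x) l = Lsum a l / 2 * x ^ 2 - Lsum b l * x.
Proof. induction l; unfold Lsum in *; simpl; [field|]. rewrite IHl. unfold fcomp. field. Qed.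

Lemma Lsum_dfcomp a b x (l : list nat) :
  Lsum (fun i => dfcomp a b i x) l = Lsum a l * x - Lsum b l.
Proof. induction l; unfold Lsum in *; simpl; [ring|]. rewrite IHl. unfold dfcomp. ring. Qed.

Lemma exp_pow_k x k : exp x ^ k = exp (INR k * x).
Proof. induction k; simpl pow; [simpl; rewrite Rmult_0_l, exp_0; ring|].
  rewrite IHk, S_INR, <- exp_plus. f_equal; ring. Qed.

Lemma INR_ge2 n : (2 <= n)%nat -> 2 <= INR n.
Proof. intros; replace 2 with (INR 2) by (simpl; lra); apply le_INR; auto. Qed.

Lemma INR_ge1 n : (1 <= n)%nat -> 1 <= INR n.
Proof. intros; replace 1 with (INR 1) by (simpl; lra); apply le_INR; auto. Qed.

Theorem theorem4 :
  exists (C : R) (p : nat),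
  forall (n k : nat) (a b : nat -> R) (lam L G bb xs x0 : R)
         (P : list (list nat)),
    (2 <= n)%nat -> (1 <= k)%nat ->
    0 < lam -> 0 < L -> 0 < G ->
    (forall x, Fobj n a b x = lam / 2 * x ^ 2 - bb * x) ->
    (forall i, (i < n)%nat -> 0 <= a i <= L) ->
    (forall y, Fobj n a b xs <= Fobj n a b y) ->
    (forall i, (i < n)%nat -> Rabs (dfcomp a b i xs) <= G) ->
    L / lam <= INR n * INR k / ln (sqrt (INR n) * INR k) ->
    perm_enum n P ->
    let eta := ln (sqrt (INR n) * INR k) / (lam * INR n * INR k) in
    avg P (fun sigma => Fobj n a b (sgd_ss a b eta sigma k x0) - Fobj n a b xs)
    <= C * (1 + ln (INR n * INR k)) ^ p *
       (lam / (INR n * INR k ^ 2) * (x0 - xs) ^ 2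
        + G ^ 2 * L ^ 2 / (lam ^ 3 * INR n * INR k ^ 2)).
Proof.
  exists 1, 4%nat.
  intros n k a b lam L G bb xs x0 P Hn Hk Hlam HL HG HF Ha Hmin Hg Hcond HP eta.
  assert (HnR := INR_ge2 n Hn). assert (HkR := INR_ge1 k Hk).
  set (nR := INR n) in *. set (kR := INR k) in *.
  assert (HFe : forall x, Fobj n a b x = / nR * (sumR n a / 2 * x ^ 2 - sumR n b * x)).
  { intros x. unfold Fobj. rewrite sumR_Lsum, Lsum_fcomp. reflexivity. }
  set (A := sumR n a) in *. set (B := sumR n b) in *.
  assert (HA : A = nR * lam /\ B = nR * bb).
  { assert (H1 := HF 1). assert (H2 := HF (-1)). rewrite HFe in H1, H2.
    assert (Hu : nR * / nR = 1) by (field; lra).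
    assert (E1 : / nR * A = lam) by nra. assert (E2 : / nR * B = bb) by nra.
    split. rewrite <- E1, <- Rmult_assoc, Hu; ring. rewrite <- E2, <- Rmult_assoc, Hu; ring. }
  destruct HA as [HA HB].
  assert (Hxs : bb = lam * xs).
  { assert (H := Hmin (bb / lam)). rewrite !HF in H.
    set (t := bb / lam) in *. assert (Ht : bb = lam * t) by (unfold t; field; lra).
    rewrite Ht in H. assert (lam / 2 * (xs - t) ^ 2 <= 0) by nra.
    assert ((xs - t) ^ 2 <= 0).
    { apply Rmult_le_reg_l with (lam / 2); [lra|]. lra. }
    assert (xs - t = 0) by nra. rewrite Ht. f_equal. lra. }
  assert (Fdiff : forall x, Fobj n a b x - Fobj n a b xs = lam / 2 * (x - xs) ^ 2).
  { intros x. rewrite !HF, Hxs. field. }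
  set (g := fun i => dfcomp a b i xs).
  assert (Hg0 : sumR n g = 0).
  { unfold g. rewrite sumR_Lsum, Lsum_dfcomp, <- !sumR_Lsum. fold A B. rewrite HA, HB, Hxs. ring. }
  assert (Hsq : 0 <= sqrt nR /\ sqrt nR * sqrt nR = nR) by (split; [apply sqrt_pos|apply sqrt_sqrt; lra]).
  assert (Hsq1 : 1 < sqrt nR) by nra.
  set (ell := ln (sqrt nR * kR)) in *.
  assert (Hell : 0 < ell) by (unfold ell; rewrite <- ln_1; apply ln_increasing; nra).
  assert (Hell2 : ell <= ln (nR * kR)).
  { unfold ell. destruct Hsq as [Hs0 Hs1].
    assert (H : sqrt nR * kR <= nR * kR) by (apply Rmult_le_compat_r; nra).
    destruct (Rle_lt_or_eq_dec _ _ H) as [Hlt|Heq]; [left; apply ln_increasing; nra | rewrite Heq; lra]. }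
  assert (Hpos : 0 < lam * nR * kR) by (apply Rmult_lt_0_compat; [apply Rmult_lt_0_compat|]; lra).
  assert (Heta : 0 < eta) by (unfold eta; apply Rdiv_lt_0_compat; auto).
  assert (HetaL : eta * L <= 1).
  { unfold eta. assert (HL' : L <= nR * kR / ell * lam).
    { apply (Rmult_le_compat_r lam) in Hcond; [|lra]. replace (L / lam * lam) with L in Hcond by (field; lra). exact Hcond. }
    apply Rmult_le_compat_l with (r := ell / (lam * nR * kR)) in HL'.
    replace (ell / (lam * nR * kR) * (nR * kR / ell * lam)) with 1 in HL' by (field; repeat split; nra).
    lra. apply Rlt_le, Rdiv_lt_0_compat; [auto|]; nra. }
  assert (Hea : forall i, (i < n)%nat -> 0 <= eta * a i <= 1).
  { intros i Hi. specialize (Ha i Hi). split; [nra|]. nra. }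
  assert (HetanlamK : eta * (nR * lam) * kR = ell) by (unfold eta; field; repeat split; nra).
  set (T1 := lam / (nR * kR ^ 2) * (x0 - xs) ^ 2).
  set (Bc := lam * kR ^ 2 * eta ^ 4 * L ^ 2 * nR).
  assert (Hpt : forall l, In l P ->
     Fobj n a b (sgd_ss a b eta l k x0) - Fobj n a b xs <= T1 + Bc * sumR n (fun j => prefx g l j ^ 2)).
  { intros l Hl. assert (Hlen := P_len n P HP l Hl).
    assert (Hin : forall i, In i l -> (i < n)%nat).
    { intros i Hi. apply HP in Hl. apply (Permutation_in _ (Permutation_sym Hl)) in Hi. apply in_seq in Hi. lia. }
    assert (Hea' : forall i, In i l -> 0 <= eta * a i <= 1) by (intros; apply Hea; auto).
    assert (Ha' : forall i, In i l -> 0 <= a i <= L) by (intros; apply Ha; auto).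
    rewrite Fdiff, sgd_err.
    set (Q := Qp a eta l). set (W := Wn a b eta xs l).
    assert (HQ := Qp_bound a eta l Hea'). fold Q in HQ.
    assert (HQe := Qp_exp a eta l Hea'). fold Q in HQe.
    rewrite (P_sum n P HP a l Hl) in HQe. fold A in HQe. rewrite HA in HQe.
    assert (HQk : Q ^ k <= / (sqrt nR * kR)).
    { eapply Rle_trans. apply pow_incr. split; [lra|]. exact HQe.
      rewrite exp_pow_k. fold kR. replace (kR * - (eta * (nR * lam))) with (- ell) by (rewrite <- HetanlamK; ring).
      rewrite exp_Ropp. unfold ell. rewrite exp_ln by nra. lra. }
    assert (HQk0 : 0 <= Q ^ k) by (apply pow_le; lra).
    assert (HQk2 : (Q ^ k) ^ 2 <= / (nR * kR ^ 2)).
    { replace (/ (nR * kR ^ 2)) with ((/ (sqrt nR * kR)) ^ 2).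
      apply pow_incr; lra. destruct Hsq as [_ Hs].
      assert (Gen : forall s kk nn, s * s = nn -> 0 < s -> 0 < kk -> (/ (s * kk)) ^ 2 = / (nn * kk ^ 2))
        by (intros s kk nn E Hs1 Hk1; subst; field; lra).
      apply Gen; lra. }
    assert (Hgeo := geom_bound Q k HQ). fold kR in Hgeo.
    assert (HW : W = eta ^ 2 * Rr a b eta xs 0 l).
    { assert (H := W_abel a b eta xs l 0). fold Q W in H.
      rewrite (P_sum n P HP) in H by auto. fold g in H. rewrite Hg0 in H. nra. }
    assert (HR := Rr_bound a b eta xs L l Ha' Hea' 0). rewrite Hlen in HR.
    rewrite Sq_idx, Hlen in HR.
    rewrite (sumR_ext n _ (fun j => prefx g l j ^ 2)) in HR by (intros; unfold g; f_equal; ring).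
    set (SS := sumR n (fun j => prefx g l j ^ 2)) in *.
    set (e0 := x0 - xs) in *. set (gm := geom Q k) in *. set (RR := Rr a b eta xs 0 l) in *.
    assert (H1 : (Q ^ k * e0 + W * gm) ^ 2 <= 2 * ((Q ^ k) ^ 2 * e0 ^ 2) + 2 * (W ^ 2 * gm ^ 2)).
    { assert (0 <= (Q ^ k * e0 - W * gm) ^ 2) by apply pow2_ge_0. nra. }
    assert (H2 : (Q ^ k) ^ 2 * e0 ^ 2 <= / (nR * kR ^ 2) * e0 ^ 2) by (apply Rmult_le_compat_r; [apply pow2_ge_0|auto]).
    assert (H3 : W ^ 2 * gm ^ 2 <= W ^ 2 * kR ^ 2).
    { apply Rmult_le_compat_l; [apply pow2_ge_0|]. apply pow_incr; lra. }
    assert (H4 : W ^ 2 <= eta ^ 4 * (L ^ 2 * nR * SS)).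
    { rewrite HW. replace ((eta ^ 2 * RR) ^ 2) with (eta ^ 4 * RR ^ 2) by ring.
      apply Rmult_le_compat_l; [apply pow_le; lra|]. exact HR. }
    assert (H5 : W ^ 2 * kR ^ 2 <= eta ^ 4 * (L ^ 2 * nR * SS) * kR ^ 2)
      by (apply Rmult_le_compat_r; [apply pow2_ge_0|auto]).
    assert (HT1 : T1 = lam * (/ (nR * kR ^ 2) * e0 ^ 2)) by (unfold T1; field; nra).
    assert (HBB : Bc * SS = lam * (eta ^ 4 * (L ^ 2 * nR * SS) * kR ^ 2)) by (unfold Bc; ring).
    rewrite HT1, HBB.
    assert (lam / 2 * (Q ^ k * e0 + W * gm) ^ 2 <= lam / 2 * (2 * ((Q ^ k) ^ 2 * e0 ^ 2) + 2 * (W ^ 2 * gm ^ 2)))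
      by (apply Rmult_le_compat_l; lra).
    nra. }
  assert (HPlen : (0 < length P)%nat).
  { destruct P. exfalso. apply (proj2 HP (seq 0 n)). apply Permutation_refl. simpl; lia. }
  assert (HPR : 0 < INR (length P)) by (apply lt_0_INR; auto).
  assert (HG2 : forall i, (i < n)%nat -> g i ^ 2 <= G ^ 2).
  { intros i Hi. rewrite <- pow2_abs. apply pow_incr. split; [apply Rabs_pos|]. apply Hg; auto. }
  assert (HS := P_Sq n P HP g Hg0 Hn (G ^ 2) HG2).
  assert (HBc : 0 <= Bc) by (unfold Bc; apply Rmult_le_pos; [|lra]; apply Rmult_le_pos; [|apply pow2_ge_0];
     apply Rmult_le_pos; [|apply pow_le; lra]; apply Rmult_le_pos; [lra|apply pow2_ge_0]).
  assert (Havg : avg P (fun sigma => Fobj n a b (sgd_ss a b eta sigma k x0) - Fobj n a b xs)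
                 <= T1 + Bc * (nR * nR * G ^ 2)).
  { unfold avg. change (fold_right (fun l acc => (Fobj n a b (sgd_ss a b eta l k x0) - Fobj n a b xs) + acc) 0 P)
      with (Lsum (fun l => Fobj n a b (sgd_ss a b eta l k x0) - Fobj n a b xs) P).
    apply Rmult_le_reg_r with (INR (length P)); auto.
    unfold Rdiv. rewrite Rmult_assoc, Rinv_l, Rmult_1_r by lra.
    eapply Rle_trans. apply Lsum_le. exact Hpt.
    rewrite Lsum_plus, Lsum_const, Lsum_scal.
    assert (H := Rmult_le_compat_l _ _ _ HBc HS). fold nR in H. nra. }
  eapply Rle_trans; [exact Havg|].
  assert (Heq : Bc * (nR * nR * G ^ 2) = ell ^ 4 * (G ^ 2 * L ^ 2 / (lam ^ 3 * nR * kR ^ 2))).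
  { unfold Bc, eta. fold ell. field. repeat split; nra. }
  rewrite Heq.
  set (M := (1 + ln (nR * kR)) ^ 4).
  assert (Hln0 : 0 <= ln (nR * kR)) by lra.
  assert (HM1 : 1 <= M) by (unfold M; replace 1 with (1 ^ 4) by ring; apply pow_incr; lra).
  assert (HM2 : ell ^ 4 <= M) by (unfold M; apply pow_incr; lra).
  assert (HT10 : 0 <= T1) by (unfold T1; apply Rmult_le_pos; [apply Rlt_le, Rdiv_lt_0_compat; nra|apply pow2_ge_0]).
  assert (HT20 : 0 <= G ^ 2 * L ^ 2 / (lam ^ 3 * nR * kR ^ 2)).
  { apply Rlt_le, Rdiv_lt_0_compat. apply Rmult_lt_0_compat; apply pow_lt; lra.
    apply Rmult_lt_0_compat; [apply Rmult_lt_0_compat; [apply pow_lt|]|apply pow_lt]; lra. }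
  fold T1. nra.
Qed.
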